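(* Let $G$ be a directed graph in which every vertex is reachable from a vertex $s$, let $t$ be a vertex of $G$, and let $k\ge 1$ be an integer. Assume that for no $\ell\in\{k,\dots,2k-1\}$ does $G$ contain an $(s,t)$-path of length exactly $dist_G(s,t)+\ell$, and that $G$ contains an $(s,t)$-path of length at least $dist_G(s,t)+k$; let $P$ be such a path of minimum length. For $i\ge0$ let $L_i$ be the set of vertices at distance exactly $i$ from $s$. Let $p$ be the smallest integer $i\ge1$ such that $L_i$ contains more than one vertex of $P$, and let $u,v$ be the first and second vertices of $P$ (in order along $P$) lying in $L_p$. Let $x$ be the vertex of $P_{u,v}$ such that $P_{u,x}$ has length exactly $k$ (the path $P_{u,v}$ has more than $k$ edges). Let $k'=\min\{k+1,|V(P_{x,v})|\}$ and let $y$ be the first vertex of the subpath of $P_{u,v}$ formed by its last $k'$ vertices. Let $k''=\min\{2k+1,|V(P_{v,t})|\}$ and let $z$ be the last vertex of the subpath of $P_{v,t}$ formed by its first $k''$ vertices. Then every path $P'$ from $u$ to $x$ of length at most $k$ in the induced subgraph $G[\bigcup_{i\ge p}L_i]$ that is vertex disjoint from $P_{y,z}$ is vertex disjoint from $P_{x,v}$ except at the vertex $x$.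
   Context: Paths are simple directed paths; the length of a path is its number of edges. $dist_G(a,b)$ denotes the length of a shortest directed $(a,b)$-path in $G$. For a path $P$ and vertices $a,b$ on it (with $a$ before $b$), $P_{a,b}$ denotes the subpath of $P$ from $a$ to $b$. *)

(* Defs.v *)
From mathcomp Require Import all_boot.
Set Implicit Arguments. Unset Strict Implicit. Unset Printing Implicit Defensive.

Section Defs.
Variables (V : finType) (e : rel V).

Definition spath (a b : V) (q : seq V) : bool :=
  if q is x :: q' then [&& x == a, path e x q', uniq q & last x q' == b]
  else false.

Definition plen (q : seq V) : nat := (size q).-1.

(* dist a b = length of a shortest directed (a,b)-path
   (equal to #|V| when b is unreachable from a). *)
Definition dist (a b : V) : nat :=
  find (fun n => [exists q : (n.+1).-tuple V, spath a b q]) (iota 0 #|V|).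

End Defs.

(* subpath of P between positions i and j (inclusive, 0-based) *)
Definition segment (T : Type) (P : seq T) (i j : nat) : seq T :=
  drop i (take j.+1 P).

(* Main.v *)
Require Import Defs.
From mathcomp Require Import all_boot zify.
Set Implicit Arguments. Unset Strict Implicit. Unset Printing Implicit Defensive.

Section H.
Variables (V : finType) (e : rel V).

Lemma spathE x0 a b q : spath e a b q <->
  [/\ 0 < size q, nth x0 q 0 = a, nth x0 q (size q).-1 = b, uniq q &
      forall i, i.+1 < size q -> e (nth x0 q i) (nth x0 q i.+1)].
Proof.
case: q => [|y r] /=; first by split => // -[].
have -> : nth x0 (y :: r) (size r) = last y r.
  by rewrite -[size r]/((size (y :: r)).-1) nth_last.
split.
- case/and4P => /eqP -> hp hu /eqP hl; split => //.
  by move=> i hi; move/(pathP x0): hp; apply.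
- case=> _ -> hl hu hp; rewrite eqxx hu hl eqxx /= andbT.
  by apply/(pathP x0) => i hi; apply: hp.
Qed.

Lemma spath_cons a b q : spath e a b q -> q = a :: behead q.
Proof. by case: q => //= y r /and4P[/eqP -> _ _ _]. Qed.

Lemma spath_uniq a b q : spath e a b q -> uniq q.
Proof. by move/(spathE a) => []. Qed.

Lemma dist_le a b q : spath e a b q -> dist e a b <= plen q.
Proof.
move=> h; have hq := spath_cons h.
have hu := spath_uniq h.
have hsz : size q = (plen q).+1 by rewrite /plen hq.
have hlt : plen q < #|V|.
  move/card_uniqP: (hu) => hc; move: (max_card (mem q)); rewrite hc hsz; done.
rewrite /dist; case: leqP => // hlt2.
have := before_find 0 hlt2.
rewrite nth_iota // add0n.
have -> // : [exists q0 : (plen q).+1.-tuple V, spath e a b q0].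
apply/existsP; exists (tcast hsz (in_tuple q)).
by rewrite val_tcast.
Qed.

Lemma dist_ex a b : (exists q, spath e a b q) ->
  exists q, spath e a b q /\ plen q = dist e a b.
Proof.
case=> q h.
have hd := dist_le h.
have hsz : size q = (plen q).+1 by rewrite /plen (spath_cons h).
have hlt : plen q < #|V|.
  move/card_uniqP: (spath_uniq h) => hc; move: (max_card (mem q)); rewrite hc hsz; done.
have hhas : has (fun n => [exists q0 : n.+1.-tuple V, spath e a b q0]) (iota 0 #|V|).
  apply/hasP; exists (plen q); first by rewrite mem_iota.
  apply/existsP; exists (tcast hsz (in_tuple q)); by rewrite val_tcast.
have := nth_find 0 hhas.
rewrite -/(dist e a b) nth_iota ?add0n; last by move: hd; lia.
case/existsP => t ht; exists (val t); split => //.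
by rewrite /plen size_tuple.
Qed.

Lemma walk_dist x p : path e x p -> dist e x (last x p) <= size p.
Proof.
case/shortenP => p' hp hu hsub.
have : spath e x (last x p') (x :: p') by apply/and4P; split.
move/dist_le; rewrite /plen /=; move=> h; apply: leq_trans h _.
apply: uniq_leq_size => //; by case/andP: hu.
Qed.

Lemma dist_tri s a b q : (exists q, spath e s a q) -> spath e a b q ->
  dist e s b <= dist e s a + plen q.
Proof.
move=> /dist_ex [q0 [h0 hl]] h.
move: (h0) (h) => /= h0' h'.
rewrite (spath_cons h0) in h0'. rewrite (spath_cons h) in h'.
move: h0' h' => /= /and4P[_ p0 _ /eqP l0] /and4P[_ p1 _ /eqP l1].
have : path e s (behead q0 ++ behead q) by rewrite cat_path p0 l0 p1.
move/walk_dist; rewrite last_cat l0 l1 size_cat.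
by rewrite -hl /plen (spath_cons h0) (spath_cons h).
Qed.

Lemma spath_cat a b c q1 q2 : spath e a b q1 -> spath e b c q2 ->
  (forall w, w \in q1 -> w \in behead q2 -> False) ->
  spath e a c (q1 ++ behead q2).
Proof.
case: q1 => [//|y1 r1]; case: q2 => [//|y2 r2] /=.
move=> /and4P[/eqP -> p1 U1 /eqP l1] /and4P[/eqP -> p2 u2 /eqP l2] hd.
have U : uniq ((a :: r1) ++ r2).
  rewrite cat_uniq; apply/and3P; split => //; last by move: u2 => /andP[].
  apply/hasPn => w hw; apply/negP => hw1; exact: hd hw1 hw.
apply/and4P; split => //.
- by rewrite cat_path p1 l1 p2.
- by rewrite last_cat l1 l2.
Qed.

Lemma plen_cat (q1 q2 : seq V) : 0 < size q1 -> 0 < size q2 ->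
  plen (q1 ++ behead q2) = plen q1 + plen q2.
Proof. case: q1 => // ? ?; case: q2 => // ? ? _ _; rewrite /plen /= size_cat; lia. Qed.

Lemma size_seg (T : Type) (P : seq T) i j : i <= j < size P -> size (segment P i j) = j.+1 - i.
Proof. move=> h; rewrite /segment size_drop size_take; case: ltnP; lia. Qed.

Lemma nth_seg (T : Type) x0 (P : seq T) i j m : i + m <= j ->
  nth x0 (segment P i j) m = nth x0 P (i + m).
Proof. move=> h; rewrite /segment nth_drop nth_take //; lia. Qed.

Lemma memsegP (T : eqType) x0 (P : seq T) i j w :
  w \in segment P i j -> exists m, [/\ i <= m <= j, m < size P & nth x0 P m = w].
Proof.
case/(nthP x0) => m hm <-.
move: hm; rewrite /segment size_drop size_take => hm.
have hm' : i + m <= j /\ i + m < size P.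
  by move: hm; case: (ltnP j.+1 (size P)); lia.
exists (i + m); rewrite nth_seg; last by lia.
split => //; lia.
Qed.

Lemma mem_seg (T : eqType) x0 (P : seq T) i j m : i <= m <= j -> j < size P ->
  nth x0 P m \in segment P i j.
Proof.
move=> h1 h2; have -> : m = i + (m - i) by lia.
rewrite -(nth_seg x0 P (j:=j)); last by lia.
apply: mem_nth; rewrite size_seg; lia.
Qed.

Lemma spath_seg x0 a b P i j : spath e a b P -> i <= j < size P ->
  spath e (nth x0 P i) (nth x0 P j) (segment P i j).
Proof.
move=> /(spathE x0) [h0 h1 h2 hu hp] hij.
apply/(spathE x0); rewrite size_seg //; split.
- lia.
- by rewrite nth_seg ?addn0 //; lia.
- by rewrite nth_seg; [congr nth; lia | lia].
- by rewrite /segment drop_uniq // take_uniq.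
- move=> m hm; rewrite !nth_seg; try lia. rewrite addnS; apply: hp; lia.
Qed.

Lemma count2 (T : Type) x0 (a : pred T) (s : seq T) i j : i < j < size s ->
  a (nth x0 s i) -> a (nth x0 s j) -> 1 < count a s.
Proof.
elim: s i j => [|y s IH] i j /=; first lia.
case: i => [|i]; case: j => [|j] //=.
- move=> hj ha hb; have : 0 < count a s.
    rewrite -has_count; apply/(has_nthP x0); exists j => //; lia.
  by rewrite ha; lia.
- move=> hij ha hb; have := IH i j; rewrite ha hb; move=> /(_ _ erefl erefl).
  move=> h; have := h ltac:(lia); lia.
Qed.

Lemma ivt (f : nat -> nat) n c : f 0 <= c < f n ->
  (forall j, j < n -> f j.+1 <= (f j).+1) -> exists2 j, j < n & f j = c.
Proof.
elim: n => [|n IH] hc hs; first lia.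
case: (ltnP c (f n)) => h.
- case: (IH _ (fun j hj => hs j (ltnW hj))); first lia.
  by move=> j hj hf; exists j => //; lia.
- exists n => //; have := hs n (ltnSn n); lia.
Qed.

Lemma beh_seg (T : Type) (P : seq T) i j : behead (segment P i j) = segment P i.+1 j.
Proof. by rewrite /segment -drop1 drop_drop add1n. Qed.

End H.

Ltac szfix := repeat match goal with
 | |- context [Equality.sort (fintype_Finite__to__eqtype_Equality ?W)] =>
   progress change (Equality.sort (fintype_Finite__to__eqtype_Equality W)) with (Finite.sort W)
 | H : context [Equality.sort (fintype_Finite__to__eqtype_Equality ?W)] |- _ =>
   progress change (Equality.sort (fintype_Finite__to__eqtype_Equality W)) with (Finite.sort W) in H
 end.
Ltac prune := repeat match goal with
 | H : ?T |- _ =>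
   match type of T with Prop => idtac end;
   lazymatch T with
   | is_true (leq _ _) => fail
   | is_true (andb (leq _ _) (leq _ _)) => fail
   | @eq nat _ _ => fail
   | ~ _ => fail
   | is_true (negb (@eq_op _ _ _)) => fail
   | _ => clear H
   end
 end.
Ltac slia := szfix; prune; lia.

Theorem lemma4 (V : finType) (e : rel V) (s t : V) (k : nat)
  (reach : forall w : V, exists q, spath e s w q)
  (hk : 1 <= k)
  (nogap : forall (l : nat) (q : seq V), k <= l <= (2 * k).-1 ->
            spath e s t q -> plen q != dist e s t + l)
  (P : seq V) (hP : spath e s t P) (hPlong : dist e s t + k <= plen P)
  (hPmin : forall q : seq V, spath e s t q -> dist e s t + k <= plen q ->
            plen P <= plen q)
  (* p : the smallest i >= 1 such that L_i contains > 1 vertex of P *)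
  (p : nat) (hp1 : 1 <= p)
  (hp2 : 1 < count (fun w => dist e s w == p) P)
  (hpmin : forall i, 1 <= i < p -> count (fun w => dist e s w == i) P <= 1)
  (* iu, iv : positions on P of u and v, the first two vertices of P in L_p *)
  (iu iv : nat) (hiu_iv : iu < iv) (hiv : iv < size P)
  (hu : dist e s (nth s P iu) == p) (hv : dist e s (nth s P iv) == p)
  (hfirst : forall j, j < iv -> j != iu -> dist e s (nth s P j) != p) :
  let u := nth s P iu in
  let v := nth s P iv in
  let ix := iu + k in                               (* position of x *)
  let x := nth s P ix in
  let k' := minn k.+1 (size (segment P ix iv)) in
  let iy := iv.+1 - k' in                           (* position of y *)
  let k'' := minn (2 * k).+1 (size (segment P iv (size P).-1)) in
  let iz := (iv + k'').-1 in                        (* position of z *)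
  forall P' : seq V,
    spath e u x P' -> plen P' <= k ->
    (forall w, w \in P' -> p <= dist e s w) ->      (* P' lies in G[U_{i>=p} L_i] *)
    (forall w, w \in P' -> w \notin segment P iy iz) ->
    forall w, w \in P' -> w \in segment P ix iv -> w = x.

Proof.
move=> u v ix x k' iy k'' iz P' hP' hlen hlay havoid w hw hwseg.
case: (w =P x) => // hwx; exfalso.
have Eix : ix = iu + k by [].
have Eiy0 : iy = iv.+1 - k' by [].
have Eiz0 : iz = (iv + k'').-1 by [].
set d := dist e s t.
have hU := spath_uniq hP.
have [hN0 hP0 hPN _ _] := (spathE e s s t P).1 hP.
have [hN'0 hP'0 hP'N hU' _] := (spathE e s u x P').1 hP'.
have hsegD : forall i j, i <= j < (size P) ->
    dist e s (nth s P j) <= dist e s (nth s P i) + (j - i).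
  move=> i j hij; have := dist_tri (reach _) (spath_seg s hP hij).
  by rewrite /plen size_seg //; move=> h; apply: (leq_trans h); slia.
have hDs : dist e s s = 0.
  have : spath e s s [:: s] by rewrite /= eqxx.
  by move/dist_le; rewrite /plen /=; slia.
have hs_only : forall y, dist e s y = 0 -> y = s.
  move=> y hy; have [q [hq hl]] := dist_ex (reach y).
  have [h0 h1 h2 _ _] := (spathE e s s y q).1 hq.
  move: hl; rewrite hy /plen => hl.
  by rewrite -h2 hl h1.
have hpv : dist e s v = p by apply/eqP.
have hpu : dist e s u = p by apply/eqP.
have hbefore : forall j, j < iu -> dist e s (nth s P j) < p.
  elim=> [|j IH] hj; first by rewrite hP0 hDs.
  have h1 := hsegD j j.+1 ltac:(slia).
  have h2 := IH ltac:(slia).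
  have h3 := hfirst j.+1 ltac:(slia) ltac:(slia).
  move: h3; rewrite neq_ltn; case/orP => //; slia.
have hafter : forall j, iu < j < (size P) -> p <= dist e s (nth s P j).
  move=> j hj; case: (leqP p (dist e s (nth s P j))) => // hc.
  have [j0 hj0 hf] := @ivt (fun m => dist e s (nth s P m)) iu
      (dist e s (nth s P j)) ltac:(rewrite /= hP0 hDs hpu; slia)
      (fun m hm => ltac:(have := hsegD m m.+1 ltac:(slia); rewrite /=; slia)).
  case: (posnP (dist e s (nth s P j))) => hz.
  - have := hs_only _ hz; rewrite -{2}hP0 => /eqP.
    rewrite nth_uniq //; [move/eqP; slia | slia].
  - have := hpmin (dist e s (nth s P j)) ltac:(slia).
    have := @count2 _ s (fun y => dist e s y == dist e s (nth s P j)) P j0 j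
        ltac:(slia) ltac:(by rewrite /= hf) ltac:(by rewrite /=).
    slia.
have hpiu : p <= iu by have := hsegD 0 iu ltac:(slia); rewrite hP0 hDs hpu; slia.
have [Sv [hSv hSvl]] := dist_ex (reach v).
rewrite hpv in hSvl.
have hSvlt : forall y, y \in Sv -> y != v -> dist e s y < p.
  move=> y /(nthP s) [i hi <-] hne.
  have [hs0 hs1 hs2 _ _] := (spathE e s s v Sv).1 hSv.
  have hi' : i < p.
    move: hSvl hne; rewrite /plen => hSvl; case: (ltnP i p) => // hip.
    have -> : i = (size Sv).-1 by slia.
    by rewrite hs2 eqxx.
  have := dist_le (spath_seg s hSv (i:=0) (j:=i) ltac:(slia)).
  rewrite /plen size_seg; last by slia.
  rewrite hs1; slia.
have hQv : spath e s t (Sv ++ behead (segment P iv (size P).-1)).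
  apply: (spath_cat hSv); first by rewrite -hPN; apply: spath_seg hP _; slia.
  move=> y hy; rewrite beh_seg => /(memsegP s) [m [hm1 hm2 hm3]].
  have hne : y != v by rewrite -hm3 nth_uniq //; slia.
  have := hSvlt y hy hne; have := hafter m ltac:(slia); rewrite hm3; slia.
have hQvl : plen (Sv ++ behead (segment P iv (size P).-1)) = p + ((size P).-1 - iv).
  rewrite plen_cat; first last.
  - by rewrite size_seg; slia.
  - by rewrite (spath_cons hSv).
  by rewrite hSvl /plen size_seg; slia.
have hT1 : p + ((size P).-1 - iv) < d + k.
  case: (leqP (d + k) (p + ((size P).-1 - iv))) => // h.
  have := hPmin _ hQv; rewrite hQvl => /(_ h); rewrite /plen ; slia.
have hT2 : d <= p + ((size P).-1 - iv) by rewrite -hQvl; apply: dist_le hQv.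
have [mw [hmw1 hmw2 hmw3]] := memsegP s hwseg.
have hmw : ix < mw.
  case: (ltnP ix mw) => // h; have emw : mw = ix by slia.
  by move: hwx; rewrite -hmw3 emw.
set a := fun y => (ix < index y P) && (index y P < (size P)).
have hhas : has a P'.
  apply/hasP; exists w => //; rewrite /a -hmw3 index_uniq //; slia.
set j1 := find a P'.
have hj1 : j1 < size P' by rewrite -has_find.
set w1 := nth s P' j1.
have haw1 : a w1 by apply: nth_find.
set iw1 := index w1 P.
have hiw1 : ix < iw1 < (size P) by [].
have hPw1 : nth s P iw1 = w1 by apply: nth_index; rewrite -index_mem; slia.
have hj1pos : 0 < j1.
  case: (posnP j1) => // h; move: haw1; rewrite /w1 h hP'0 /a.
  rewrite /u index_uniq //; slia.
have hj1last : j1 < (size P').-1.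
  case: (ltnP j1 (size P').-1) => // h.
  have ej : j1 = (size P').-1 by slia.
  move: haw1; rewrite /w1 ej hP'N /a /x index_uniq //; slia.
have hplP' : (size P').-1 <= k by [].
have hDw1 : dist e s w1 <= p + j1.
  have := spath_seg s hP' (i:=0) (j:=j1) ltac:(slia); rewrite hP'0 => hs1.
  have := dist_tri (reach u) hs1.
  by rewrite hpu /plen size_seg -/w1; slia.
have hw1av : w1 \notin segment P iy iz by apply: havoid; apply: mem_nth.
have hsegxv : size (segment P ix iv) = iv.+1 - ix by rewrite size_seg; slia.
have hsegvt : size (segment P iv (size P).-1) = (size P).-1.+1 - iv by rewrite size_seg; slia.
have Ek' : k' = minn k.+1 (iv.+1 - ix) by rewrite -hsegxv.
have Ek'' : k'' = minn (2 * k).+1 ((size P).-1.+1 - iv) by rewrite -hsegvt.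
have Eiy : iy = iv.+1 - k' by [].
have Eiz : iz = (iv + k'').-1 by [].
have hout : ~ (iy <= iw1 <= iz).
  move=> h; move: hw1av; rewrite -hPw1 mem_seg //; slia.
have hixv : ix < iv by clear - hmw hmw1; lia.
have hiyv : iy <= iv by rewrite Eiy Ek'; clear - hixv; lia.
have hizv : iv <= iz by rewrite Eiz Ek''; clear - hiv; lia.
have hiw1' : iw1 < size P by case/andP: hiw1.
have hiw1'' : ix < iw1 by case/andP: hiw1.
case: (ltnP iv iw1) => hcase.
- (* beyond v: layer contradiction *)
  have hiz : iz < iw1 by move: hout; clear - hiyv hcase; lia.
  have hiz2 : iv + 2 * k < iw1.
    move: hiz; rewrite Eiz Ek''; clear - hiw1' hiv; szfix; lia.
  have := spath_seg s hP (i:=iw1) (j:=(size P).-1) ltac:(clear - hiw1'; szfix; lia).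
  rewrite hPw1 hPN => hs2.
  have := dist_tri (reach w1) hs2.
  rewrite /plen size_seg; last by clear - hiw1'; szfix; lia.
  rewrite -/d => hd.
  clear - hd hDw1 hT1 hj1last hplP' hiz2 hiw1'; szfix; lia.
- (* before v: shortcut contradiction *)
  have hiw1v : iw1 + k < iv.
    move: hout; rewrite Eiy Ek'; clear - hcase hizv hiw1'' Eix; lia.
  set A := segment P 0 iu.
  set B := segment P' 0 j1.
  set C := segment P iw1 (size P).-1.
  have hA : spath e s u A by rewrite -hP0; apply: spath_seg hP _; slia.
  have hB : spath e u w1 B by rewrite -hP'0; apply: spath_seg hP' _; slia.
  have hC : spath e w1 t C by rewrite -hPw1 -hPN; apply: spath_seg hP _; slia.
  have hAB : spath e s w1 (A ++ behead B).
    apply: (spath_cat hA hB) => y /(memsegP s) [m [hm1 hm2 hm3]].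
    rewrite beh_seg => /(memsegP s) [m' [hm1' hm2' hm3']].
    have hyl : p <= dist e s y by apply: hlay; rewrite -hm3'; apply: mem_nth.
    case: (ltnP m iu) => hmu.
    + by have := hbefore m hmu; rewrite hm3; slia.
    + have emu : m = iu by slia.
      move: hm3'; rewrite -hm3 emu -/u -hP'0 => /eqP; rewrite nth_uniq //; slia.
  have hQ1 : spath e s t ((A ++ behead B) ++ behead C).
    apply: (spath_cat hAB hC) => y hy.
    rewrite beh_seg => /(memsegP s) [m2 [hm21 hm22 hm23]].
    have hiy : index y P = m2 by rewrite -hm23 index_uniq.
    move: hy; rewrite mem_cat /B beh_seg => /orP [] /(memsegP s) [m [hm1 hm2 hm3]].
    + by move: hm3; rewrite -hm23 => /eqP; rewrite nth_uniq //; slia.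
    + case: (ltnP m j1) => hmj.
      * have := before_find s hmj; rewrite -/j1 hm3 /a hiy; clear - hm21 hm22 hiw1''; szfix; lia.
      * have em : m = j1 by slia.
        move: hm3; rewrite em -/w1 -hPw1 -hm23 => /eqP; rewrite nth_uniq //; slia.
  have hszA : size A = iu.+1 by rewrite /A size_seg; clear - hiu_iv hiv; szfix; lia.
  have hszB : size B = j1.+1 by rewrite /B size_seg; clear - hj1; szfix; lia.
  have hszC : size C = size P - iw1 by rewrite /C size_seg; clear - hiw1'; szfix; lia.
  have hQ1l : plen ((A ++ behead B) ++ behead C) = iu + j1 + ((size P).-1 - iw1).
    rewrite /plen !size_cat !size_behead hszA hszB hszC; clear - hiw1'; szfix; lia.
  have hlt : plen ((A ++ behead B) ++ behead C) < plen P.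
    rewrite hQ1l /plen; clear - hj1last hplP' hiw1'' hiw1' Eix; szfix; lia.
  case: (leqP (d + k) (plen ((A ++ behead B) ++ behead C))) => h.
  + have := hPmin _ hQ1 h; move=> h2; clear - hlt h2; lia.
  + move: h; rewrite hQ1l; clear - hT2 hpiu hiw1v hj1pos hiv; szfix; lia.
Qed.
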